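(* Let $m^*$ be the exact model of the environment, fix a base policy $\pi^b$, and let $\bar m,\bar{\bar m}\in\mathcal{M}$. Suppose $\bar m$ is a PCM or a PRM of $m^*$ with respect to $\bar\Pi=\{\pi_{\bar m}^r,\pi_{\bar m}^{ce}\}$ and $J$, and $\bar{\bar m}$ is a performance-maximizing model (PXM) of $m^*$ with respect to $\bar{\bar\Pi}=\{\pi_{\bar{\bar m}}^r,\pi_{\bar{\bar m}}^{ce}\}$ and $J$. Then $J_{m^*}^{\pi_{\bar{\bar m}}^{ce}}\ge J_{m^*}^{\pi_{\bar m}^{r}}$.
   Context: Fix finite sets $\mathcal{S}$ (states) and $\mathcal{A}$ (actions) and a discount factor $\gamma\in[0,1)$. A model is a triple $m=(p,r,d)$ with transition kernel $p:\mathcal{S}\times\mathcal{A}\times\mathcal{S}\to[0,1]$, reward function $r:\mathcal{S}\times\mathcal{A}\times\mathcal{S}\to\mathbb{R}$ and initial state distribution $d$ on $\mathcal{S}$; $\mathcal{M}$ is the set of all such models, and $m^*\in\mathcal{M}$ denotes the exact model of the environment. A policy is a map $\pi:\mathcal{S}\times\mathcal{A}\to[0,1]$ giving a distribution over actions at each state; $\mathbb{\Pi}$ is the set of all policies. For $m=(p,r,d)$ and $\pi\in\mathbb{\Pi}$, the performance is $J_m^\pi=\mathbb{E}_{\pi,p}[\sum_{t=0}^\infty\gamma^t r(S_t,A_t,S_{t+1})\mid S_0\sim d]$. Given the base policy $\pi^b$ and a model $m$, the rollout policy $\pi_m^r$ is the policy obtained by one step of policy iteration on $\pi^b$ in $m$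 (policy evaluation of $\pi^b$ in $m$ followed by greedy policy improvement), and the certainty-equivalence policy $\pi_m^{ce}$ is the policy obtained by running policy iteration or value iteration to convergence in $m$ starting from $\pi^b$ (an optimal policy of $m$). Given $\Pi\subseteq\mathbb{\Pi}$: $m$ is a PCM of $m^*$ w.r.t. $\Pi$ and $J$ if for all $\pi^i,\pi^j\in\Pi$, $J_m^{\pi^i}\ge J_m^{\pi^j}$ implies $J_{m^*}^{\pi^i}\le J_{m^*}^{\pi^j}$; $m$ is a PRM of $m^*$ w.r.t. $\Pi$ and $J$ if for all $\pi^i,\pi^j\in\Pi$, $J_m^{\pi^i}\ge J_m^{\pi^j}$ implies $J_{m^*}^{\pi^i}\ge J_{m^*}^{\pi^j}$; $m$ is a PXM of $m^*$ w.r.t. $\Pi$ and $J$ if $m$ is a PRM of $m^*$ w.r.t. $\Pi$ and $J$ and every optimal policy $\pi_m^*$ of $m$ that belongs to $\Pi$ satisfies $J_{m^*}^{\pi_m^*}=\max_{\pi\in\mathbb{\Pi}}J_{m^*}^{\pi}$. *)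

(* Defs.v *)
From HB Require Import structures.
From mathcomp Require Import all_boot all_order all_algebra.
From mathcomp Require Import all_classical all_reals all_analysis.
Set Implicit Arguments. Unset Strict Implicit. Unset Printing Implicit Defensive.
Import Order.TTheory GRing.Theory Num.Theory.
Import numFieldTopology.Exports numFieldNormedType.Exports.
Local Open Scope ring_scope.

Section MDP.
Variables (S A : finType) (R : realType) (gamma : R).

Record model := Model {
  trans : S -> A -> S -> R;
  rew   : S -> A -> S -> R;
  init  : S -> R
}.

Definition is_model (m : model) : Prop :=
  (forall s a s', 0 <= trans m s a s') /\
  (forall s a, \sum_(s' : S) trans m s a s' = 1) /\
  (forall s, 0 <= init m s) /\ (\sum_(s : S) init m s = 1).

Definition policy := S -> A -> R.

Definition is_policy (pi : policy) : Prop :=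
  (forall s a, 0 <= pi s a) /\ (forall s, \sum_(a : A) pi s a = 1).

Fixpoint state_dist (m : model) (pi : policy) (mu0 : S -> R) (t : nat) : S -> R :=
  match t with
  | 0 => mu0
  | t'.+1 => fun s' => \sum_(s : S) \sum_(a : A)
       state_dist m pi mu0 t' s * pi s a * trans m s a s'
  end.

Definition exp_reward (m : model) (pi : policy) (mu0 : S -> R) (t : nat) : R :=
  \sum_(s : S) \sum_(a : A) \sum_(s' : S)
     state_dist m pi mu0 t s * pi s a * trans m s a s' * rew m s a s'.

Definition disc_return (m : model) (pi : policy) (mu0 : S -> R) : R :=
  limn (fun n => \sum_(0 <= t < n) gamma ^+ t * exp_reward m pi mu0 t).

Definition J (m : model) (pi : policy) : R := disc_return m pi (init m).

Definition Vfun (m : model) (pi : policy) (s : S) : R :=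
  disc_return m pi (fun s0 => (s0 == s)%:R).

Definition qval (m : model) (V : S -> R) (s : S) (a : A) : R :=
  \sum_(s' : S) trans m s a s' * (rew m s a s' + gamma * V s').

Definition greedy_action (Q : S -> A -> R) (s : S) : option A :=
  [pick a | [forall b, Q s b <= Q s a]].

Definition greedy (Q : S -> A -> R) : policy :=
  fun s a => if greedy_action Q s is Some b then (a == b)%:R else 0.

Definition rollout (m : model) (pib : policy) : policy :=
  greedy (qval m (Vfun m pib)).

Definition bellman (m : model) (V : S -> R) : S -> R :=
  fun s => if greedy_action (qval m V) s is Some a then qval m V s a else 0.

Fixpoint val_iter (m : model) (pib : policy) (n : nat) : S -> R :=
  match n with
  | 0 => Vfun m pib
  | n'.+1 => bellman m (val_iter m pib n')
  end.

Definition V_conv (m : model) (pib : policy) (s : S) : R :=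
  limn (fun n => val_iter m pib n s).

Definition ce (m : model) (pib : policy) : policy :=
  greedy (qval m (V_conv m pib)).

Definition optimal (m : model) (pi : policy) : Prop :=
  is_policy pi /\ forall pi', is_policy pi' -> J m pi' <= J m pi.

Definition PCM (m mstar : model) (Pi : policy -> Prop) : Prop :=
  forall pi pj, Pi pi -> Pi pj -> J m pi >= J m pj -> J mstar pi <= J mstar pj.

Definition PRM (m mstar : model) (Pi : policy -> Prop) : Prop :=
  forall pi pj, Pi pi -> Pi pj -> J m pi >= J m pj -> J mstar pi >= J mstar pj.

Definition PXM (m mstar : model) (Pi : policy -> Prop) : Prop :=
  PRM m mstar Pi /\
  forall pi, Pi pi -> optimal m pi ->
    forall pi', is_policy pi' -> J mstar pi' <= J mstar pi.

Definition rc_class (m : model) (pib : policy) : policy -> Prop :=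
  fun pi => pi = rollout m pib \/ pi = ce m pib.

End MDP.

(* Main.v *)
Require Import Defs.
From HB Require Import structures.
From mathcomp Require Import all_boot all_order all_algebra.
From mathcomp Require Import all_classical all_reals all_analysis.
From mathcomp Require Import ring lra.
Import Order.TTheory GRing.Theory Num.Theory.
Import numFieldTopology.Exports numFieldNormedType.Exports.
Local Open Scope classical_set_scope.
Local Open Scope ring_scope.

Section Gen.
Variables (R : realType) (gamma : R).
Hypotheses (g0 : 0 <= gamma) (g1 : gamma < 1).

Lemma geoE n : (\sum_(k < n) gamma ^+ k) * (1 - gamma) = 1 - gamma ^+ n.
Proof.
elim: n => [|n IH]; first by rewrite big_ord0 expr0 mul0r subrr.
by rewrite big_ord_recr /= mulrDl IH exprS; ring.
Qed.

Lemma geo_le n : \sum_(k < n) gamma ^+ k <= (1 - gamma)^-1.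
Proof.
have h : 0 < 1 - gamma by rewrite subr_gt0.
rewrite -[leRHS]div1r ler_pdivlMr // geoE.
have := exprn_ge0 n g0; lra.
Qed.

Lemma le0_of_geo x K : (forall n, x <= gamma ^+ n * K) -> x <= 0.
Proof.
move=> h.
have c : (fun n => gamma ^+ n * K) @ \oo --> 0 * K.
  apply: cvgMr_tmp; apply: cvg_expr; rewrite ger0_norm //.
rewrite mul0r in c.
apply: (cvgr_to_ge c); exact: nearW.
Qed.

Lemma geo_cvg (u : R ^nat) C : (forall n, `|u n.+1 - u n| <= C * gamma ^+ n) ->
  cvgn u /\ forall n, `|limn u - u n| <= C * gamma ^+ n * (1 - gamma)^-1.
Proof.
move=> hu.
have C0 : 0 <= C by have := hu 0%N; rewrite expr0 mulr1; apply: le_trans.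
have tail : forall n k, `|u (n + k)%N - u n| <= C * gamma ^+ n * \sum_(j < k) gamma ^+ j.
  move=> n; elim=> [|k IH]; first by rewrite addn0 subrr normr0 big_ord0 mulr0.
  rewrite addnS big_ord_recr /= mulrDr.
  have -> : u (n + k).+1 - u n = (u (n+k).+1 - u (n+k)%N) + (u (n + k)%N - u n) by ring.
  apply: (le_trans (ler_normD _ _)); rewrite addrC; apply: lerD => //.
  by rewrite -mulrA -exprD.
have tail' : forall n k, `|u (n + k)%N - u n| <= C * gamma ^+ n * (1 - gamma)^-1.
  move=> n k; apply: (le_trans (tail n k)); apply: ler_wpM2l.
    by rewrite mulr_ge0 // exprn_ge0.
  exact: geo_le.
pose q n := C * \sum_(k < n) gamma ^+ k.
pose p n := u n + q n.
have qb : forall n, q n <= C * (1-gamma)^-1 by move=> n; rewrite /q; apply: ler_wpM2l => //; exact: geo_le.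
have cq : cvgn q.
  apply: nondecreasing_is_cvgn.
    apply/nondecreasing_seqP => n; rewrite /q big_ord_recr /= mulrDr lerDl mulr_ge0 // exprn_ge0 //.
  by exists (C * (1-gamma)^-1) => _ [n _ <-]; exact: qb.
have cp : cvgn p.
  apply: nondecreasing_is_cvgn.
    apply/nondecreasing_seqP => n; rewrite /p /q big_ord_recr /= mulrDr addrA.
    have := hu n; rewrite ler_norml => /andP[h1 h2]; lra.
  exists (u 0%N + 2 * (C * (1-gamma)^-1)) => _ [n _ <-].
  have := tail 0%N n; rewrite add0n expr0 mulr1 ler_norml => /andP[_ h].
  have := qb n; rewrite /p /q; lra.
have cu : cvgn u.
  have -> : u = p - q by apply/funext => n; rewrite /p /= addrK.
  exact: is_cvgB.
split => // n.
rewrite ler_norml; apply/andP; split.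
- have : u n - C * gamma ^+ n * (1 - gamma)^-1 <= limn u.
    apply: limr_ge => //; near=> k.
    have hk : (n <= k)%N by near: k; exact: nbhs_infty_ge.
    have := tail' n (k - n)%N; rewrite subnKC // ler_norml => /andP[h1 h2]; lra.
  lra.
- have : limn u <= u n + C * gamma ^+ n * (1 - gamma)^-1.
    apply: limr_le => //; near=> k.
    have hk : (n <= k)%N by near: k; exact: nbhs_infty_ge.
    have := tail' n (k - n)%N; rewrite subnKC // ler_norml => /andP[h1 h2]; lra.
  lra.
Unshelve. all: by end_near.
Qed.

End Gen.

Section MDPProof.
Variables (S A : finType) (R : realType) (gamma : R).
Hypotheses (g0 : 0 <= gamma) (g1 : gamma < 1).
Variable a0 : A.

Lemma sum_ge_term (T : finType) (f : T -> R) : (forall i, 0 <= f i) -> forall i, f i <= \sum_j f j.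
Proof. move=> h0 i; rewrite (bigD1 i) //= lerDl; apply: sumr_ge0 => j _; exact: h0. Qed.

Lemma argmax_ex (f : A -> R) : exists b, forall a, f a <= f b.
Proof. have [b _ hb] := @arg_maxP _ R A a0 xpredT f erefl. by exists b => a; apply: hb. Qed.

Lemma greedy_spec (Q : S -> A -> R) s :
  exists b, greedy_action Q s = Some b /\ forall a, Q s a <= Q s b.
Proof.
rewrite /greedy_action; case: pickP => [b /forallP hb | hn]; first by exists b.
exfalso; have [b hb] := argmax_ex (Q s).
by have := hn b; rewrite (introT forallP hb).
Qed.

Lemma greedy_policy (Q : S -> A -> R) : is_policy (greedy Q).
Proof.
split.
  by move=> s a; rewrite /greedy; case: greedy_action => [b|] //; exact: ler0n.
move=> s; have [b [e _]] := greedy_spec Q s.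
rewrite /greedy e (bigD1 b) //= eqxx big1 ?addr0 // => a /negbTE ->; done.
Qed.

Lemma greedy_sum (Q : S -> A -> R) s (f : A -> R) b :
  greedy_action Q s = Some b -> \sum_a greedy Q s a * f a = f b.
Proof.
move=> e; rewrite /greedy e (bigD1 b) //= eqxx mul1r big1 ?addr0 // => a /negbTE ->.
by rewrite mul0r.
Qed.

Lemma bellman_spec (m : model S A R) V s : exists b,
  bellman gamma m V s = qval gamma m V s b /\
  greedy_action (qval gamma m V) s = Some b /\
  forall a, qval gamma m V s a <= qval gamma m V s b.
Proof.
have [b [e h]] := greedy_spec (qval gamma m V) s.
by exists b; rewrite /bellman e.
Qed.

Lemma qval_contr (m : model S A R) (hm : is_model m) V W c s a :
  (forall s', `|V s' - W s'| <= c) ->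
  `|qval gamma m V s a - qval gamma m W s a| <= gamma * c.
Proof.
case: hm => tr0 [trs _] h.
have -> : qval gamma m V s a - qval gamma m W s a =
    gamma * \sum_s' trans m s a s' * (V s' - W s').
  rewrite /qval -sumrB mulr_sumr; apply: eq_bigr => s' _; ring.
rewrite normrM ger0_norm //; apply: ler_wpM2l => //.
apply: (le_trans (ler_norm_sum _ _ _)).
rewrite -[c]mul1r -(trs s a) mulr_suml; apply: ler_sum => s' _.
rewrite normrM ger0_norm //; apply: ler_wpM2l => //.
Qed.

Lemma bellman_contr (m : model S A R) (hm : is_model m) V W c s :
  (forall s', `|V s' - W s'| <= c) ->
  `|bellman gamma m V s - bellman gamma m W s| <= gamma * c.
Proof.
move=> h.
have [b [-> [_ hb]]] := bellman_spec m V s.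
have [b' [-> [_ hb']]] := bellman_spec m W s.
have := qval_contr _ hm _ _ _ s b h; have := qval_contr _ hm _ _ _ s b' h.
have := hb b'; have := hb' b.
rewrite !ler_norml => h1 h2 /andP[h3 h4] /andP[h5 h6].
apply/andP; split; lra.
Qed.

Lemma V_conv_fix (m : model S A R) (hm : is_model m) pib s :
  bellman gamma m (V_conv gamma m pib) s = V_conv gamma m pib s.
Proof.
set v := val_iter gamma m pib.
pose D := \sum_s0 `|v 1%N s0 - v 0%N s0|.
have D0 : 0 <= D by apply: sumr_ge0.
have hd : forall n s0, `|v n.+1 s0 - v n s0| <= D * gamma ^+ n.
  elim=> [|n IH] s0.
    rewrite expr0 mulr1.
    by rewrite /D (bigD1 s0) //= lerDl; apply: sumr_ge0.
  rewrite exprS mulrCA.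
  exact: (bellman_contr _ hm _ _ _ s0 IH).
have hc : forall s0, cvgn (fun n => v n s0) /\
    forall n, `|V_conv gamma m pib s0 - v n s0| <= D * gamma ^+ n * (1 - gamma)^-1.
  move=> s0; exact: (@geo_cvg _ _ g0 g1 (fun n => v n s0) D (fun n => hd n s0)).
apply/eqP; rewrite -subr_eq0 -normr_le0.
apply: (@le0_of_geo _ _ g0 g1 _ (2 * (D * (1 - gamma)^-1))) => n.
have e1 : `|bellman gamma m (V_conv gamma m pib) s - v n.+1 s| <=
    gamma * (D * gamma ^+ n * (1 - gamma)^-1).
  exact: (bellman_contr _ hm _ _ _ s (fun s0 => (hc s0).2 n)).
have e2 := (hc s).2 n.+1.
have X0 : 0 <= D * gamma ^+ n * (1 - gamma)^-1.
  by rewrite !mulr_ge0 ?exprn_ge0 // invr_ge0 subr_ge0 ltW.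
have E1 : D * gamma ^+ n.+1 * (1 - gamma)^-1 = gamma * (D * gamma ^+ n * (1 - gamma)^-1).
  by rewrite exprS; ring.
have E2 : gamma ^+ n * (2 * (D * (1 - gamma)^-1)) = 2 * (D * gamma ^+ n * (1 - gamma)^-1).
  by ring.
have gX : gamma * (D * gamma ^+ n * (1 - gamma)^-1) <= D * gamma ^+ n * (1 - gamma)^-1.
  by apply: ler_piMl => //; apply: ltW.
rewrite E2; rewrite E1 distrC in e2.
have h := ler_normD (bellman gamma m (V_conv gamma m pib) s - v n.+1 s) (v n.+1 s - V_conv gamma m pib s).
have eq : bellman gamma m (V_conv gamma m pib) s - v n.+1 s + (v n.+1 s - V_conv gamma m pib s) =
   bellman gamma m (V_conv gamma m pib) s - V_conv gamma m pib s by ring.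
rewrite eq in h.
lra.
Qed.

Definition Wv (m : model S A R) pi mu0 (V : S -> R) t :=
  \sum_s state_dist m pi mu0 t s * V s.

Lemma dist_ge0 (m : model S A R) (hm : is_model m) pi (hpi : is_policy pi) mu :
  (forall s, 0 <= mu s) -> forall t s, 0 <= state_dist m pi mu t s.
Proof.
case: hm => tr0 _; case: hpi => pi0 _ h0; elim=> [|t IH] s //=.
apply: sumr_ge0 => s1 _; apply: sumr_ge0 => a _; rewrite !mulr_ge0 //.
Qed.

Lemma dist_mass (m : model S A R) (hm : is_model m) pi (hpi : is_policy pi) mu t :
  \sum_s state_dist m pi mu t s = \sum_s mu s.
Proof.
case: hm => tr0 [trs _]; case: hpi => pi0 pis.
elim: t => [|t IH] //=; rewrite -IH.
rewrite exchange_big /=; apply: eq_bigr => s _.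
rewrite exchange_big /=.
under eq_bigr do rewrite -mulr_sumr trs mulr1.
by rewrite -mulr_sumr pis mulr1.
Qed.

Lemma one_step (m : model S A R) pi V mu :
  \sum_s mu s * (\sum_a pi s a * qval gamma m V s a) =
  exp_reward m pi mu 0 + gamma * \sum_s' state_dist m pi mu 1 s' * V s'.
Proof.
rewrite /exp_reward /qval /=.
have -> : gamma * \sum_s' (\sum_s \sum_a mu s * pi s a * trans m s a s') * V s' =
   \sum_s \sum_a \sum_s' gamma * (mu s * pi s a * trans m s a s' * V s').
  transitivity (\sum_s' \sum_s \sum_a gamma * (mu s * pi s a * trans m s a s' * V s')).
    rewrite mulr_sumr; apply: eq_bigr => s' _; rewrite mulr_suml mulr_sumr.
    apply: eq_bigr => s _; rewrite mulr_suml mulr_sumr.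
    by apply: eq_bigr => a _.
  rewrite exchange_big; apply: eq_bigr => s _; exact: exchange_big.
rewrite -big_split; apply: eq_bigr => s _ /=.
rewrite mulr_sumr -big_split; apply: eq_bigr => a _ /=.
rewrite -big_split !mulr_sumr; apply: eq_bigr => s' _ /=; ring.
Qed.

Lemma step_ineq (m : model S A R) (hm : is_model m) pi (hpi : is_policy pi) V mu0
  (hmu : forall s, 0 <= mu0 s) (hV : forall s, bellman gamma m V s = V s) t :
  exp_reward m pi mu0 t + gamma * Wv m pi mu0 V t.+1 <= Wv m pi mu0 V t.
Proof.
rewrite -[X in X <= _]/(exp_reward m pi (state_dist m pi mu0 t) 0 +
   gamma * \sum_s state_dist m pi (state_dist m pi mu0 t) 1 s * V s).
rewrite -one_step; apply: ler_sum => s _.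
apply: ler_wpM2l; first exact: dist_ge0.
rewrite -(hV s); have [b [-> [_ hb]]] := bellman_spec m V s.
case: hpi => pi0 pis.
apply: (@le_trans _ _ (\sum_a pi s a * qval gamma m V s b)).
  by apply: ler_sum => a _; apply: ler_wpM2l.
by rewrite -mulr_suml pis mul1r.
Qed.

Lemma step_eq (m : model S A R) V mu0
  (hV : forall s, bellman gamma m V s = V s) t :
  let g := greedy (qval gamma m V) in
  exp_reward m g mu0 t + gamma * Wv m g mu0 V t.+1 = Wv m g mu0 V t.
Proof.
move=> g.
rewrite -[LHS]/(exp_reward m g (state_dist m g mu0 t) 0 +
   gamma * \sum_s state_dist m g (state_dist m g mu0 t) 1 s * V s).
rewrite -one_step; apply: eq_bigr => s _; congr (_ * _).
have [b [eb [eg _]]] := bellman_spec m V s.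
by rewrite /g (greedy_sum _ _ _ _ eg) -eb hV.
Qed.

Lemma chain_le (m : model S A R) (hm : is_model m) pi (hpi : is_policy pi) V mu0
  (hmu : forall s, 0 <= mu0 s) (hV : forall s, bellman gamma m V s = V s) n :
  \sum_(0 <= t < n) gamma ^+ t * exp_reward m pi mu0 t + gamma ^+ n * Wv m pi mu0 V n
   <= Wv m pi mu0 V 0.
Proof.
elim: n => [|n IH]; first by rewrite big_geq // add0r expr0 mul1r.
rewrite big_nat_recr //=; apply: le_trans IH; rewrite -addrA lerD2l.
rewrite exprSr -mulrA -mulrDr; apply: ler_wpM2l; first exact: exprn_ge0.
exact: step_ineq.
Qed.

Lemma chain_eq (m : model S A R) V mu0
  (hV : forall s, bellman gamma m V s = V s) n :
  let g := greedy (qval gamma m V) in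
  \sum_(0 <= t < n) gamma ^+ t * exp_reward m g mu0 t + gamma ^+ n * Wv m g mu0 V n
   = Wv m g mu0 V 0.
Proof.
move=> g.
elim: n => [|n IH]; first by rewrite big_geq // add0r expr0 mul1r.
rewrite big_nat_recr //= -IH -addrA; congr (_ + _).
by rewrite exprSr -mulrA -mulrDr (step_eq _ _ _ hV).
Qed.

Lemma W_bound (m : model S A R) (hm : is_model m) pi (hpi : is_policy pi) V mu0
  (hmu : forall s, 0 <= mu0 s) (hmu1 : \sum_s mu0 s = 1) t :
  `|Wv m pi mu0 V t| <= \sum_s `|V s|.
Proof.
apply: (le_trans (ler_norm_sum _ _ _)); apply: ler_sum => s _.
rewrite normrM ger0_norm; last exact: dist_ge0.
apply: ler_piMl => //.
rewrite -hmu1 -(dist_mass _ hm _ hpi mu0 t).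
apply: sum_ge_term => s1; exact: dist_ge0.
Qed.

Definition Rmax (m : model S A R) := \sum_s \sum_a \sum_s' `|rew m s a s'|.

Lemma rew_bound (m : model S A R) (hm : is_model m) pi (hpi : is_policy pi) mu0
  (hmu : forall s, 0 <= mu0 s) (hmu1 : \sum_s mu0 s = 1) t :
  `|exp_reward m pi mu0 t| <= Rmax m.
Proof.
have hm' := hm; case: hm' => tr0 [trs _]; have hpi' := hpi; case: hpi' => pi0 pis.
apply: (le_trans (ler_norm_sum _ _ _)); apply: ler_sum => s _.
apply: (le_trans (ler_norm_sum _ _ _)); apply: ler_sum => a _.
apply: (le_trans (ler_norm_sum _ _ _)); apply: ler_sum => s' _.
have d0 := dist_ge0 _ hm _ hpi _ hmu t s.
have d1 : state_dist m pi mu0 t s <= 1.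
  rewrite -hmu1 -(dist_mass _ hm _ hpi mu0 t).
  apply: sum_ge_term => s1; exact: dist_ge0.
have p1 : pi s a <= 1 by rewrite -(pis s); apply: sum_ge_term.
have t1 : trans m s a s' <= 1 by rewrite -(trs s a); apply: sum_ge_term.
rewrite normrM [`|_ * _ * _|]ger0_norm ?mulr_ge0 //.
apply: ler_piMl => //.
by rewrite !mulr_ile1 ?mulr_ge0.
Qed.

Lemma partial_cvg (m : model S A R) (hm : is_model m) pi (hpi : is_policy pi) :
  let u := fun n => \sum_(0 <= t < n) gamma ^+ t * exp_reward m pi (init m) t in
  cvgn u /\ forall n, `|limn u - u n| <= Rmax m * gamma ^+ n * (1 - gamma)^-1.
Proof.
move=> u; have hm' := hm; case: hm' => _ [_ [in0 ins]].
apply: (@geo_cvg _ _ g0 g1 u (Rmax m)) => n.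
rewrite /u big_nat_recr //= addrAC subrr add0r.
rewrite normrM ger0_norm ?exprn_ge0 // mulrC; apply: ler_wpM2r; first exact: exprn_ge0.
exact: rew_bound.
Qed.

Lemma J_le_W (m : model S A R) (hm : is_model m) pi (hpi : is_policy pi) V
  (hV : forall s, bellman gamma m V s = V s) :
  J gamma m pi <= \sum_s init m s * V s.
Proof.
have hm' := hm; case: hm' => _ [_ [in0 ins]].
have [cu hb] := partial_cvg _ hm _ hpi.
set u := fun n => _ in cu hb.
have -> : J gamma m pi = limn u by [].
rewrite -subr_le0.
apply: (@le0_of_geo _ _ g0 g1 _ (Rmax m * (1 - gamma)^-1 + \sum_s `|V s|)) => n.
have h1 := hb n.
have h2 := chain_le _ hm _ hpi _ _ in0 hV n.
have h3 := W_bound _ hm _ hpi V _ in0 ins n.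
have h4 : - (gamma ^+ n * Wv m pi (init m) V n) <= gamma ^+ n * \sum_s `|V s|.
  rewrite -mulrN; apply: ler_wpM2l; first exact: exprn_ge0.
  by move: h3; rewrite ler_norml => /andP[h _]; rewrite lerNl.
have E : gamma ^+ n * (Rmax m * (1 - gamma)^-1 + \sum_s `|V s|) =
  Rmax m * gamma ^+ n * (1 - gamma)^-1 + gamma ^+ n * \sum_s `|V s| by ring.
rewrite E.
have -> : \sum_s init m s * V s = Wv m pi (init m) V 0 by [].
move: h1; rewrite ler_norml => /andP[_ h1].
rewrite /u in h1 h2 *. lra.
Qed.

Lemma J_greedy (m : model S A R) (hm : is_model m) V
  (hV : forall s, bellman gamma m V s = V s) :
  \sum_s init m s * V s <= J gamma m (greedy (qval gamma m V)).
Proof.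
have hm' := hm; case: hm' => _ [_ [in0 ins]].
have hpi := greedy_policy (qval gamma m V).
have [cu hb] := partial_cvg _ hm _ hpi.
set u := fun n => _ in cu hb.
have -> : J gamma m (greedy (qval gamma m V)) = limn u by [].
rewrite -subr_le0.
apply: (@le0_of_geo _ _ g0 g1 _ (Rmax m * (1 - gamma)^-1 + \sum_s `|V s|)) => n.
have h1 := hb n.
have h2 := chain_eq m V (init m) hV n.
have h3 := W_bound _ hm _ hpi V _ in0 ins n.
have h4 : gamma ^+ n * Wv m (greedy (qval gamma m V)) (init m) V n <= gamma ^+ n * \sum_s `|V s|.
  apply: ler_wpM2l; first exact: exprn_ge0.
  by move: h3; rewrite ler_norml => /andP[_ h].
have E : gamma ^+ n * (Rmax m * (1 - gamma)^-1 + \sum_s `|V s|) =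
  Rmax m * gamma ^+ n * (1 - gamma)^-1 + gamma ^+ n * \sum_s `|V s| by ring.
rewrite E.
have -> : \sum_s init m s * V s = Wv m (greedy (qval gamma m V)) (init m) V 0 by [].
move: h1; rewrite ler_norml => /andP[h1 _].
rewrite /u in h1 h2 *. simpl in h2. lra.
Qed.

Lemma ce_optimal (m : model S A R) (hm : is_model m) pib :
  optimal gamma m (ce gamma m pib).
Proof.
split; first exact: greedy_policy.
move=> pi' hpi'.
have hV := V_conv_fix _ hm pib.
exact: le_trans (J_le_W _ hm _ hpi' _ hV) (J_greedy _ hm _ hV).
Qed.

End MDPProof.

Theorem proposition4 (S A : finType) (R : realType) (gamma : R)
  (hgamma0 : 0 <= gamma) (hgamma1 : gamma < 1)
  (mstar mbar mbb : model S A R) (pib : policy S A R)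
  (hmstar : is_model mstar) (hmbar : is_model mbar) (hmbb : is_model mbb)
  (hpib : is_policy pib)
  (hbar : PCM gamma mbar mstar (rc_class gamma mbar pib) \/
          PRM gamma mbar mstar (rc_class gamma mbar pib))
  (hbb : PXM gamma mbb mstar (rc_class gamma mbb pib)) :
  J gamma mstar (ce gamma mbb pib) >= J gamma mstar (rollout gamma mbar pib).
Proof.
have [_ [_ [_ ins]]] := hmstar.
have [s0 _] : exists s0 : S, true.
  case: (pickP (@predT S)) => [s _|h]; first by exists s.
  exfalso; move: ins; rewrite big1 => [/eqP|s _]; first by rewrite eq_sym oner_eq0.
  by have := h s.
have [_ pis] := hpib.
have [a0 _] : exists a0 : A, true.
  case: (pickP (@predT A)) => [a _|h]; first by exists a.
  exfalso; move: (pis s0); rewrite big1 => [/eqP|a _]; first by rewrite eq_sym oner_eq0.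
  by have := h a.
case: hbb => _ hx.
apply: (hx (ce gamma mbb pib)).
- by right.
- exact: (@ce_optimal _ _ _ _ hgamma0 hgamma1 a0 _ hmbb pib).
- exact: (@greedy_policy _ _ _ a0 _).
Qed.
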